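(* Let $(M,d)$ be a complete pointed metric space and $f\in\mathrm{Lip}_0(M,M)$, and assume there is $v\in\mathrm{span}(\delta(M))\cap A_{\widehat f}$. Then $A_{\widehat f}$ is dense in $\mathcal F(M)$. In particular, this holds if $\mathrm{int}(A_{\widehat f})\neq\emptyset$ or if there is $x\in M$ with $d(0,f^n(x))\to\infty$.
   Context: A pointed metric space is a metric space with a distinguished point $0$. $\mathrm{Lip}_0(M,M)$ denotes the Lipschitz maps $f:M\to M$ with $f(0)=0$; $\mathrm{Lip}_0(M)$ the real-valued Lipschitz functions vanishing at $0$ normed by the Lipschitz constant. $\delta:M\to\mathrm{Lip}_0(M)^*$, $\delta(x)(\varphi)=\varphi(x)$; $\mathcal F(M)$ is the norm-closed linear span of $\delta(M)$. $\widehat f$ is the unique bounded linear operator on $\mathcal F(M)$ with $\widehat f(\delta(x))=\delta(f(x))$. For an operator $T$, $A_T=\{\mu:\lim_n\|T^n\mu\|=\infty\}$. *)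

(* Defs.v *)
From HB Require Import structures.
From mathcomp Require Import all_boot all_order all_algebra.
From mathcomp Require Import all_classical all_reals all_analysis.
Set Implicit Arguments. Unset Strict Implicit. Unset Printing Implicit Defensive.
Import Order.TTheory GRing.Theory Num.Theory.
Local Open Scope classical_set_scope.
Local Open Scope ring_scope.

Section Defs.
Variables (R : realType) (M : Type).

Definition is_metric (d : M -> M -> R) : Prop :=
  [/\ (forall x y, 0 <= d x y),
      (forall x y, d x y = 0 <-> x = y),
      (forall x y, d x y = d y x) &
      (forall x y z, d x z <= d x y + d y z)].

Definition complete_metric (d : M -> M -> R) : Prop :=
  forall u : nat -> M,
    (forall e : R, 0 < e -> exists N : nat, forall m n : nat,
        (N <= m)%N -> (N <= n)%N -> d (u m) (u n) < e) ->
    exists l : M, forall e : R, 0 < e -> exists N : nat, forall n : nat,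
        (N <= n)%N -> d (u n) l < e.

Definition Lip0_self (d : M -> M -> R) (o : M) (f : M -> M) : Prop :=
  f o = o /\ exists L : R, forall x y, d (f x) (f y) <= L * d x y.

Definition Lip0 (d : M -> M -> R) (o : M) (phi : M -> R) : Prop :=
  phi o = 0 /\ exists L : R, forall x y, `|phi x - phi y| <= L * d x y.

Definition Lip0_ball (d : M -> M -> R) (o : M) (phi : M -> R) : Prop :=
  phi o = 0 /\ forall x y, `|phi x - phi y| <= d x y.

(* functionals on real functions on M; only their values on Lip_0(M) matter *)
Definition functional := (M -> R) -> R.

Definition fsub (mu nu : functional) : functional := fun phi => mu phi - nu phi.

Definition dnorm (d : M -> M -> R) (o : M) (mu : functional) : \bar R :=
  ereal_sup [set (`|mu phi|)%:E | phi in Lip0_ball d o].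

Definition in_dual (d : M -> M -> R) (o : M) (mu : functional) : Prop :=
  (forall (a : R) (phi psi : M -> R), Lip0 d o phi -> Lip0 d o psi ->
      mu (fun x => a * phi x + psi x) = a * mu phi + mu psi) /\
  exists C : R, forall phi, Lip0_ball d o phi -> `|mu phi| <= C.

Definition delta (x : M) : functional := fun phi => phi x.

Definition in_span_delta (d : M -> M -> R) (o : M) (mu : functional) : Prop :=
  exists (n : nat) (a : 'I_n -> R) (x : 'I_n -> M),
    forall phi, Lip0 d o phi -> mu phi = \sum_(i < n) a i * phi (x i).

(* mu in F(M): the norm-closure of span(delta(M)) in Lip_0(M)^* *)
Definition in_free (d : M -> M -> R) (o : M) (mu : functional) : Prop :=
  in_dual d o mu /\
  forall e : R, 0 < e -> exists nu, in_span_delta d o nu /\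
     (dnorm d o (fsub mu nu) < e%:E)%E.

(* T is a bounded linear operator on F(M) with T(delta x) = delta (f x);
   this characterizes \hat f (it is unique). *)
Definition is_hat (d : M -> M -> R) (o : M) (f : M -> M)
    (T : functional -> functional) : Prop :=
  [/\ (forall mu, in_free d o mu -> in_free d o (T mu)),
      (forall (a : R) (mu nu : functional), in_free d o mu -> in_free d o nu ->
         forall phi, Lip0 d o phi ->
           T (fun psi => a * mu psi + nu psi) phi = a * T mu phi + T nu phi),
      (exists C : R, forall mu, in_free d o mu ->
         (dnorm d o (T mu) <= C%:E * dnorm d o mu)%E) &
      (forall x phi, Lip0 d o phi -> T (delta x) phi = phi (f x))].

Definition A_set (d : M -> M -> R) (o : M) (T : functional -> functional)
    : set functional :=
  [set mu | in_free d o mu /\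
     (fun n : nat => dnorm d o (iter n T mu)) @ \oo --> +oo%E].

Definition dense_in_free (d : M -> M -> R) (o : M) (S : set functional) : Prop :=
  forall mu, in_free d o mu -> forall e : R, 0 < e ->
    exists nu, S nu /\ (dnorm d o (fsub mu nu) < e%:E)%E.

Definition nonempty_interior_in_free (d : M -> M -> R) (o : M)
    (S : set functional) : Prop :=
  exists mu0, exists r : R, 0 < r /\ S mu0 /\ forall nu, in_free d o nu ->
     (dnorm d o (fsub nu mu0) < r%:E)%E -> S nu.

End Defs.

(* Main.v *)
Require Import Defs.
From HB Require Import structures.
From mathcomp Require Import all_boot all_order all_algebra.
From mathcomp Require Import all_classical all_reals all_analysis.
From mathcomp Require Import ring lra zify.
Import Order.TTheory GRing.Theory Num.Theory.
Local Open Scope classical_set_scope.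
Local Open Scope ring_scope.
Set Implicit Arguments. Unset Strict Implicit. Unset Printing Implicit Defensive.

Section BigMax.
Variable R : realDomainType.
Variables (I : finType) (P : pred I) (F : I -> R) (x0 : R).

Lemma bigmax_ub_x0 :
  x0 <= \big[Order.max/x0]_(j | P j) F j /\
  forall i, P i -> F i <= \big[Order.max/x0]_(j | P j) F j.
Proof.
have: forall s : seq I, x0 <= \big[Order.max/x0]_(j <- s | P j) F j /\
  forall i, i \in s -> P i -> F i <= \big[Order.max/x0]_(j <- s | P j) F j.
  elim=> [|a s [IH1 IH2]]; first by rewrite big_nil lexx.
  rewrite big_cons; split.
    by case: (P a) => //; rewrite le_max IH1 orbT.
  move=> i; rewrite inE => /orP[/eqP-> Pa|/IH2 h Pi]; first by rewrite Pa /= le_max lexx.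
  by move: (h Pi) => {}h; case: (P a); rewrite ?le_max h ?orbT.
move=> /(_ (index_enum I)) [h1 h2]; split => // i Pi.
by apply: h2 => //; rewrite mem_index_enum.
Qed.

Lemma bigmax_mem : \big[Order.max/x0]_(j | P j) F j \in x0 :: [seq F j | j <- enum I].
Proof.
apply: (big_ind (fun x => x \in x0 :: [seq F j | j <- enum I])).
- by rewrite inE eqxx.
- by move=> x y hx hy /=; case: (leP x y).
- by move=> i _; rewrite inE map_f ?orbT // mem_enum.
Qed.

Lemma bigmax_lt c : x0 < c -> (forall i, P i -> F i < c) ->
  \big[Order.max/x0]_(j | P j) F j < c.
Proof.
move=> h0 h; apply: (big_ind (fun x => x < c)) => //.
by move=> x y hx hy /=; case: (leP x y).
Qed.
End BigMax.

Section RL.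
Variable R : realFieldType.
Variable m : nat.
Variable A : 'I_m -> R.

Definition Ssum (u : 'I_m -> R) := \sum_k A k * u k.
Definition vals (u : 'I_m -> R) : seq R := undup (0 :: [seq u k | k <- enum 'I_m]).
Definition Hyp (u : 'I_m -> R) (B : R) := forall a b, a < b ->
  (forall k, ~~ (a < u k < b)) ->
  (0 <= a -> `|\sum_(k | b <= u k) A k| * (b - a) <= B) /\
  (b <= 0 -> `|\sum_(k | u k <= a) A k| * (b - a) <= B).

Lemma HypN u B : Hyp u B -> Hyp (fun k => - u k) B.
Proof.
move=> H a b ab fr.
have ab' : - b < - a by rewrite ltrN2.
have fr' : forall k, ~~ (- b < u k < - a).
  move=> k; apply/negP => /andP[h1 h2]; move/negP: (fr k); apply.
  apply/andP; split; lra.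
have [H1 H2] := H _ _ ab' fr'.
have -> : b - a = - a - - b by ring.
split => h0.
- rewrite (eq_bigl (fun k => u k <= - b)); first exact: H2 ltac:(lra).
  by move=> k /=; rewrite lerNr.
- rewrite (eq_bigl (fun k => - a <= u k)); first exact: H1 ltac:(lra).
  by move=> k /=; rewrite lerNl.
Qed.

Lemma SsumN u : Ssum (fun k => - u k) = - Ssum u.
Proof. by rewrite /Ssum -sumrN; apply: eq_bigr => k _; rewrite mulrN. Qed.

Lemma valsN u : size (vals (fun k => - u k)) = size (vals u).
Proof.
rewrite /vals.
have -> : 0 :: [seq - u k | k <- enum 'I_m] = map -%R (0 :: [seq u k | k <- enum 'I_m]).
  by rewrite /= oppr0 -map_comp.
by rewrite undup_map_inj ?size_map //; apply: oppr_inj.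
Qed.

Lemma vals_gt0 u : (0 < size (vals u))%N.
Proof.
have : (0:R) \in vals u by rewrite mem_undup inE eqxx.
by case: (vals u).
Qed.

Lemma stepP u B : Hyp u B -> (exists k, 0 < u k) ->
  exists u', (size (vals u') < size (vals u))%N /\ Hyp u' B /\
    `|Ssum u - Ssum u'| <= B.
Proof.
move=> H [k0 hk0].
set umax := \big[Order.max/0]_(k : 'I_m) u k.
have [_ ubu] := bigmax_ub_x0 xpredT u 0.
have ub : forall k, u k <= umax by move=> k; apply: ubu.
have umpos : 0 < umax by have := ub k0; lra.
have ummem : umax \in 0 :: [seq u j | j <- enum 'I_m] by apply: bigmax_mem.
set w := \big[Order.max/0]_(k | u k < umax) u k.
have [w0 ubw] := bigmax_ub_x0 (fun k => u k < umax) u 0.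
have wlt : w < umax by apply: bigmax_lt.
have wmem : w \in 0 :: [seq u j | j <- enum 'I_m] by apply: bigmax_mem.
have ltw : forall k, u k != umax -> u k <= w.
  move=> k hk; apply: ubw; rewrite lt_neqAle hk ub //.
pose u' := fun k => if u k == umax then w else u k.
have frw : forall k, ~~ (w < u k < umax).
  move=> k; apply/negP => /andP[h1 h2].
  have := ltw k ltac:(by rewrite lt_eqF). lra.
have [Hw _] := H w umax wlt frw.
have {}Hw := Hw w0.
have {w0} w0 : 0 <= w := w0.
have B0 : 0 <= B.
  have : 0 <= `|\sum_(k | umax <= u k) A k| * (umax - w) by apply: mulr_ge0 => //; lra.
  lra.
exists u'; split; [|split].
- have uq := undup_uniq (0 :: [seq u j | j <- enum 'I_m]).
  have inum : umax \in vals u by rewrite mem_undup.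
  have sub : {subset vals u' <= rem umax (vals u)}.
    move=> r; rewrite mem_undup (mem_rem_uniq _ uq) inE => /orP[/eqP->|].
      rewrite inE; apply/andP; split; first by apply/eqP => h; lra.
      by rewrite mem_undup inE eqxx.
    case/mapP => k _ ->; rewrite /u' inE.
    case: (u k =P umax) => [_|/eqP ne]; apply/andP; split; rewrite ?mem_undup //.
    - by apply/eqP => h; lra.
    - by rewrite inE map_f ?orbT // mem_enum.
  have := uniq_leq_size (undup_uniq _) sub.
  rewrite size_rem //; have := vals_gt0 u; case: (size (vals u)) => //.
- move=> a b ab fr.
  have frum : (b <= w) || (b <= 0) -> forall k, ~~ (a < u k < b).
    move=> hb k; have := fr k; rewrite /u'; case: eqP => // ->.
    move=> _; apply/negP => /andP[_ h]; move: hb => /orP[] ?; lra.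
  split => h0.
  + case: (lerP b w) => hbw.
    * have [h1 _] := H a b ab (frum (introT orP (or_introl hbw))).
      rewrite (eq_bigl (fun k => b <= u k)); first exact: h1 h0.
      move=> k; rewrite /u'; case: eqP => // ->.
      apply/idP/idP => _; lra.
    * rewrite big_pred0 ?normr0 ?mul0r //.
      move=> k; rewrite /u'; case: eqP => [_|/eqP ne]; first by apply/negbTE; rewrite -ltNge.
      apply/negbTE; rewrite -ltNge; have := ltw k ne; lra.
  + have [_ h2] := H a b ab (frum (introT orP (or_intror h0))).
    rewrite (eq_bigl (fun k => u k <= a)); first exact: h2 h0.
    move=> k; rewrite /u'; case: eqP => // ->.
    apply/idP/idP => ?; lra.
- suff -> : Ssum u - Ssum u' = (\sum_(k | umax <= u k) A k) * (umax - w).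
    by rewrite normrM (@ger0_norm _ (umax - w)) //; lra.
  rewrite /Ssum -sumrB mulr_suml [RHS]big_mkcond /=; apply: eq_bigr => k _.
  rewrite /u'; case: (u k =P umax) => [->|/eqP ne]; rewrite ?lexx; first by ring.
  have -> : (umax <= u k) = false by rewrite leNgt lt_neqAle ne ub.
  by rewrite subrr.
Qed.

Lemma reduce u B : Hyp u B -> (forall k, u k = 0) \/
  exists u', (size (vals u') < size (vals u))%N /\ Hyp u' B /\
    `|Ssum u - Ssum u'| <= B.
Proof.
move=> H.
have [pos|npos] := pselect (exists k, 0 < u k); first by right; apply: stepP.
have [[k neg]|nneg] := pselect (exists k, u k < 0).
  have hk : 0 < - u k by lra.
  have [u'' [h1 [h2 h3]]] := stepP (HypN H) (ex_intro _ k hk).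
  right; exists (fun k => - u'' k); split; first by rewrite valsN -(valsN u).
  split; first exact: HypN.
  move: h3; rewrite !SsumN.
  have -> : forall x y : R, `|- x - y| = `|x - - y|.
    by move=> x y; rewrite -normrN; congr `|_|; ring.
  by [].
left => k.
have h1 : ~~ (0 < u k) by apply/negP => h; apply: npos; exists k.
have h2 : ~~ (u k < 0) by apply/negP => h; apply: nneg; exists k.
lra.
Qed.

Lemma RLind B : 0 <= B -> forall N u, (size (vals u) <= N.+1)%N -> Hyp u B ->
  `|Ssum u| <= N%:R * B.
Proof.
move=> B0; elim=> [|N IH] u hs H; case: (reduce H) => [z|[u' [h1 [h2 h3]]]].
- rewrite /Ssum big1 ?normr0 ?mul0r // => k _; by rewrite z mulr0.
- have := vals_gt0 u'; lia.
- rewrite /Ssum big1 ?normr0 ?mulr_ge0 // => k _; by rewrite z mulr0.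
- have := IH u' ltac:(lia) h2.
  have := ler_normD (Ssum u') (Ssum u - Ssum u'); rewrite addrC subrK.
  rewrite -addn1 natrD mulrDl mul1r; lra.
Qed.

Lemma RL u : Ssum u != 0 -> exists a b, a < b /\ (forall k, ~~ (a < u k < b)) /\
  ((0 <= a /\ `|Ssum u| / m.+1%:R < `|\sum_(k | b <= u k) A k| * (b - a)) \/
   (b <= 0 /\ `|Ssum u| / m.+1%:R < `|\sum_(k | u k <= a) A k| * (b - a))).
Proof.
move=> S0; have [//|nH] := pselect (exists a b, a < b /\ (forall k, ~~ (a < u k < b)) /\
  ((0 <= a /\ `|Ssum u| / m.+1%:R < `|\sum_(k | b <= u k) A k| * (b - a)) \/
   (b <= 0 /\ `|Ssum u| / m.+1%:R < `|\sum_(k | u k <= a) A k| * (b - a)))).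
exfalso.
set B := `|Ssum u| / m.+1%:R.
have Bpos : 0 < B by rewrite divr_gt0 ?normr_gt0 // ltr0Sn.
have H : Hyp u B.
  move=> a b ab fr; split=> h0; rewrite leNgt; apply/negP => hlt; apply: nH;
    exists a, b; (split; [by []|split; [by []|]]); [left|right]; by split.
have hs : (size (vals u) <= m.+1)%N.
  by rewrite /vals (leq_trans (size_undup _)) //= size_map size_enum_ord.
have := RLind (ltW Bpos) hs H.
have e : `|Ssum u| = m%:R * B + B.
  rewrite /B; field; have : (0:R) < 1 + m%:R by rewrite ltr_pwDl // ler0n. by move=> h; rewrite gt_eqF.
lra.
Qed.
End RL.

Section FA.
Variables (R : realType) (M : Type) (d : M -> M -> R) (o : M).
Hypothesis hd : is_metric d.

Definition mol n (c : 'I_n -> R) (x : 'I_n -> M) : functional R M :=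
  fun phi => \sum_i c i * phi (x i).
Definition eqv (mu nu : functional R M) :=
  forall phi, Lip0_ball d o phi -> mu phi = nu phi.

Lemma d_ge0 x y : 0 <= d x y. Proof. by case: hd. Qed.
Lemma d_xx x : d x x = 0. Proof. by case: hd => _ h _ _; apply/h. Qed.
Lemma d_sym x y : d x y = d y x. Proof. by case: hd. Qed.
Lemma d_tri x y z : d x z <= d x y + d y z. Proof. by case: hd. Qed.

Lemma ball_Lip0 phi : Lip0_ball d o phi -> Lip0 d o phi.
Proof. by move=> [h0 h]; split => //; exists 1 => x y; rewrite mul1r. Qed.

Lemma ball0 : Lip0_ball d o (fun _ => 0).
Proof. by split => // x y; rewrite subrr normr0 d_ge0. Qed.

Lemma Lip0_lin a phi psi : Lip0 d o phi -> Lip0 d o psi ->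
  Lip0 d o (fun x => a * phi x + psi x).
Proof.
move=> [p0 [L1 h1]] [q0 [L2 h2]]; split; first by rewrite p0 q0 mulr0 addr0.
exists (`|a| * L1 + L2) => x y.
have -> : a * phi x + psi x - (a * phi y + psi y) = a * (phi x - phi y) + (psi x - psi y) by ring.
apply: (le_trans (ler_normD _ _)); rewrite normrM mulrDl -mulrA.
by apply: lerD => //; apply: ler_wpM2l.
Qed.

Lemma dnorm_eqv mu nu : eqv mu nu -> dnorm d o mu = dnorm d o nu.
Proof.
move=> h; rewrite /dnorm; congr ereal_sup; apply/seteqP; split => _ [phi hp <-];
  by exists phi => //; rewrite h.
Qed.

Lemma dnorm_ge mu phi : Lip0_ball d o phi -> ((`|mu phi|)%:E <= dnorm d o mu)%E.
Proof. by move=> hp; apply: ereal_sup_ubound; exists phi. Qed.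

Lemma dnorm_le mu (r : R) : (forall phi, Lip0_ball d o phi -> `|mu phi| <= r) ->
  (dnorm d o mu <= r%:E)%E.
Proof. by move=> h; apply: ge_ereal_sup => _ [phi hp <-]; rewrite lee_fin h. Qed.

Lemma dnorm_ge0 mu : (0 <= dnorm d o mu)%E.
Proof. exact: le_trans (dnorm_ge mu ball0). Qed.

Lemma dnorm_lt mu (r : R) phi : (dnorm d o mu < r%:E)%E -> Lip0_ball d o phi ->
  `|mu phi| < r.
Proof. by move=> h hp; rewrite -lte_fin (le_lt_trans (dnorm_ge _ hp)). Qed.

Lemma dnorm_sym mu nu : dnorm d o (fsub mu nu) = dnorm d o (fsub nu mu).
Proof.
rewrite /dnorm; congr ereal_sup; apply/seteqP; split => _ [phi hp <-];
  by exists phi => //; rewrite /fsub distrC.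
Qed.

Lemma ball_bound phi x : Lip0_ball d o phi -> `|phi x| <= d x o.
Proof. by move=> [h0 h]; have := h x o; rewrite h0 subr0. Qed.

Lemma span_free mu : in_span_delta d o mu -> in_free d o mu.
Proof.
move=> [n [c [x h]]]; split; last first.
  move=> e e0; exists mu; split; first by exists n, c, x.
  apply: le_lt_trans (dnorm_le (r:=0) _) _; last by rewrite lte_fin.
  by move=> phi _; rewrite /fsub subrr normr0.
split.
  move=> a phi psi hp hq; rewrite !h //; last exact: Lip0_lin.
  rewrite big_distrr -big_split /=.
  by apply: eq_bigr => i _; ring.
exists (\sum_(i < n) `|c i| * d (x i) o) => phi hp.
rewrite h; last exact: ball_Lip0.
apply: le_trans; first exact: ler_norm_sum.
apply: ler_sum => i _; rewrite normrM; apply: ler_wpM2l => //.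
exact: ball_bound.
Qed.

Lemma span_mol n c x : in_span_delta d o (@mol n c x).
Proof. by exists n, c, x. Qed.


Section Comb.
Variables (n1 n2 : nat) (x1 : 'I_n1 -> M) (x2 : 'I_n2 -> M).
Definition zc (k : 'I_(n1 + n2)) := match fintype.split k with inl i => x1 i | inr j => x2 j end.
Definition cl (c : 'I_n1 -> R) (k : 'I_(n1 + n2)) :=
  match fintype.split k with inl i => c i | inr _ => 0 end.
Definition cr (c : 'I_n2 -> R) (k : 'I_(n1 + n2)) :=
  match fintype.split k with inl _ => 0 | inr j => c j end.

Lemma mol_l c phi : mol (cl c) zc phi = mol c x1 phi.
Proof.
rewrite /mol big_split_ord /= [X in _ + X]big1 ?addr0.
  apply: eq_bigr => i _; rewrite /cl /zc.
  by have -> : fintype.split (lshift n2 i) = inl i := unsplitK (inl _).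
move=> j _; rewrite /cl /zc.
by have -> : fintype.split (rshift n1 j) = inr j := unsplitK (inr _); rewrite mul0r.
Qed.

Lemma mol_r c phi : mol (cr c) zc phi = mol c x2 phi.
Proof.
rewrite /mol big_split_ord /= big1 ?add0r.
  apply: eq_bigr => j _; rewrite /cr /zc.
  by have -> : fintype.split (rshift n1 j) = inr j := unsplitK (inr _).
move=> i _; rewrite /cr /zc.
by have -> : fintype.split (lshift n2 i) = inl i := unsplitK (inl _); rewrite mul0r.
Qed.
End Comb.

Lemma mol_lin n a (c c' : 'I_n -> R) z phi :
  a * mol c z phi + mol c' z phi = mol (fun k => a * c k + c' k) z phi.
Proof.
rewrite /mol big_distrr -big_split /=; apply: eq_bigr => i _; ring.
Qed.

Lemma span_lin a mu nu : in_span_delta d o mu -> in_span_delta d o nu ->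
  in_span_delta d o (fun psi => a * mu psi + nu psi).
Proof.
move=> [n1 [c1 [x1 h1]]] [n2 [c2 [x2 h2]]].
exists (n1 + n2)%N, (fun k => a * cl c1 k + cr c2 k), (zc x1 x2) => phi hp.
rewrite -[RHS]/(mol (fun k => a * cl c1 k + cr c2 k) (zc x1 x2) phi).
by rewrite -mol_lin mol_l mol_r h1 ?h2.
Qed.

Lemma free_lin a mu nu : in_free d o mu -> in_free d o nu ->
  in_free d o (fun psi => a * mu psi + nu psi).
Proof.
move=> [[l1 [C1 b1]] ap1] [[l2 [C2 b2]] ap2]; split; first split.
- move=> b phi psi hp hq; rewrite l1 // l2 //; ring.
- exists (`|a| * C1 + C2) => phi hp.
  apply: le_trans (ler_normD _ _) _; rewrite normrM.
  by apply: lerD; [apply: ler_wpM2l|]; auto.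
- move=> e e0.
  set e1 := e / (`|a| + 2).
  have e10 : 0 < e1 by rewrite divr_gt0 // ltr_wpDl.
  have [mu' [s1 h1]] := ap1 e1 e10.
  have [nu' [s2 h2]] := ap2 e1 e10.
  exists (fun psi => a * mu' psi + nu' psi); split; first exact: span_lin.
  apply: le_lt_trans (dnorm_le (r := (`|a| + 1) * e1) _) _.
    move=> phi hp; rewrite /fsub.
    have -> : a * mu phi + nu phi - (a * mu' phi + nu' phi) =
      a * fsub mu mu' phi + fsub nu nu' phi by rewrite /fsub; ring.
    apply: le_trans (ler_normD _ _) _; rewrite normrM mulrDl mul1r.
    apply: lerD; last exact/ltW/(dnorm_lt h2).
    by apply: ler_wpM2l => //; exact/ltW/(dnorm_lt h1).
  rewrite lte_fin /e1 mulrA ltr_pdivrMr ?ltr_wpDl //.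
  by rewrite mulrC ltr_pM2l //; lra.
Qed.


Lemma clamp_lip (a b x y : R) :
  `|Order.min b (Order.max a x) - Order.min b (Order.max a y)| <= `|x - y|.
Proof.
have h1 := ler_norm (x - y); have h2 := ler_norm (y - x); rewrite distrC in h2.
rewrite ler_norml !maxEle; case: ifPn => ?; case: ifPn => ?; rewrite !minEle;
  repeat case: ifPn => ?; apply/andP; split; lra.
Qed.

Lemma clamp_val (a b x : R) : a < b -> ~~ (a < x < b) ->
  Order.min b (Order.max a x) = if b <= x then b else a.
Proof.
move=> ab fr.
have h : x <= a \/ b <= x.
  case: (lerP x a) => h1; [by left|right].
  case: (lerP b x) => h2 //; by move: fr; rewrite h1 h2.
rewrite maxEle; case: ifPn => ?; rewrite minEle; repeat case: ifPn => ?; case: h => ?; lra.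
Qed.

Lemma est m (A C : 'I_m -> R) (p : 'I_m -> M) (de : R) : 0 < de ->
  (forall G : {set 'I_m}, \sum_(k in G) A k != 0 -> de <= `|\sum_(k in G) C k|) ->
  forall phi, Lip0_ball d o phi ->
  ((`|mol A p phi| * (de / (m.+1%:R * (\sum_k `|A k| + 1))))%:E <= dnorm d o (mol C p))%E.
Proof.
move=> de0 hde phi hp.
set u := fun k => phi (p k).
have eS : mol A p phi = Ssum A u by [].
have [S0|S0] := eqVneq (Ssum A u) 0.
  rewrite eS S0 normr0 mul0r; exact: dnorm_ge0.
have [a [b [ab [fr cases]]]] := RL S0.
set SA := \sum_k `|A k|.
have SA0 : 0 <= SA by apply: sumr_ge0.
have key : forall G : {set 'I_m},
    `|Ssum A u| / m.+1%:R < `|\sum_(k in G) A k| * (b - a) ->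
    (exists psi, Lip0_ball d o psi /\ `|mol C p psi| = `|\sum_(k in G) C k| * (b - a)) ->
    ((`|mol A p phi| * (de / (m.+1%:R * (SA + 1))))%:E <= dnorm d o (mol C p))%E.
  move=> G hG [psi [hpsi epsi]]; apply: le_trans (dnorm_ge _ hpsi); rewrite lee_fin epsi eS.
  set X := `|Ssum A u| / m.+1%:R in hG *.
  have X0 : 0 <= X by rewrite divr_ge0.
  have mA0 : \sum_(k in G) A k != 0.
    by apply/eqP => h; move: hG; rewrite h normr0 mul0r; lra.
  have hC := hde G mA0.
  have mAle : `|\sum_(k in G) A k| <= SA.
    apply: le_trans; first exact: ler_norm_sum.
    rewrite /SA [X in _ <= X](bigID (mem G)) /=.
    by rewrite lerDl; apply: sumr_ge0.
  have Yle : X / (SA + 1) <= b - a.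
    rewrite ler_pdivrMr; last lra.
    have : `|\sum_(k in G) A k| * (b - a) <= SA * (b - a) by rewrite ler_wpM2r //; lra.
    nra.
  have -> : `|Ssum A u| * (de / (m.+1%:R * (SA + 1))) = X / (SA + 1) * de.
    rewrite /X; field; apply/andP; split; first lra.
    by rewrite gt_eqF // ltr_pwDl // ler0n.
  nra.
case: cases => [[a0 h]|[b0 h]].
- have hk := key [set k | b <= u k]%SET. apply: hk.
    by rewrite (eq_bigl (fun k => b <= u k)) // => k; rewrite inE.
  exists (fun z => Order.min b (Order.max a (phi z)) - a); split.
    split.
      case: hp => -> _; rewrite maxEle; case: ifPn => ?; rewrite minEle; repeat case: ifPn => ?; lra.
    move=> x y; have [_ hl] := hp.
    have -> : forall s t : R, s - a - (t - a) = s - t by move=> s t; ring.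
    exact: le_trans (clamp_lip _ _ _ _) (hl x y).
  rewrite /mol (eq_bigr (fun k => C k * (if b <= u k then b - a else 0))); last first.
    by move=> k _; rewrite (clamp_val ab (fr k)); case: ifP => _; rewrite ?subrr.
  have ba : 0 <= b - a by lra.
  rewrite -(ger0_norm ba) -normrM mulr_suml [in RHS]big_mkcond /=; congr `|_|.
  by apply: eq_bigr => k _; rewrite inE (ger0_norm ba); case: ifP => _; rewrite ?mulr0 ?mul0r.
- have hk := key [set k | u k <= a]%SET; apply: hk.
    by rewrite (eq_bigl (fun k => u k <= a)) // => k; rewrite inE.
  exists (fun z => Order.min b (Order.max a (phi z)) - b); split.
    split.
      case: hp => -> _; rewrite maxEle; case: ifPn => ?; rewrite minEle;
        repeat case: ifPn => ?; lra.
    move=> x y; have [_ hl] := hp.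
    have -> : forall s t : R, s - b - (t - b) = s - t by move=> s t; ring.
    exact: le_trans (clamp_lip _ _ _ _) (hl x y).
  rewrite /mol (eq_bigr (fun k => C k * (if u k <= a then a - b else 0))); last first.
    move=> k _; rewrite (clamp_val ab (fr k)); case: (lerP b (u k)) => h1.
      have -> : (u k <= a) = false by apply/negbTE; rewrite -ltNge; lra.
      by rewrite subrr.
    have -> : (u k <= a) = true by move: (fr k); rewrite h1 andbT -leNgt => ->.
    by [].
  have ba : 0 <= b - a by lra.
  rewrite -(ger0_norm ba) -normrM -normrN; congr `|_|.
  rewrite mulr_suml -sumrN [in RHS]big_mkcond /=; apply: eq_bigr => k _; rewrite inE ?(ger0_norm ba).
  by case: ifP => _; rewrite ?mulr0 ?mul0r ?oppr0 //; ring.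
Qed.

Section BigMin.
Variables (I : finType) (P : pred I) (F : I -> R) (x0 : R).

Lemma bigmin_lb_x0 :
  \big[Order.min/x0]_(j | P j) F j <= x0 /\
  forall i, P i -> \big[Order.min/x0]_(j | P j) F j <= F i.
Proof.
have: forall s : seq I, \big[Order.min/x0]_(j <- s | P j) F j <= x0 /\
  forall i, i \in s -> P i -> \big[Order.min/x0]_(j <- s | P j) F j <= F i.
  elim=> [|a s [IH1 IH2]]; first by rewrite big_nil lexx.
  rewrite big_cons; split.
    by case: (P a) => //; rewrite ge_min IH1 orbT.
  move=> i; rewrite inE => /orP[/eqP-> Pa|/IH2 h Pi]; first by rewrite Pa /= ge_min lexx.
  by move: (h Pi) => {}h; case: (P a); rewrite ?ge_min h ?orbT.
move=> /(_ (index_enum I)) [h1 h2]; split => // i Pi.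
by apply: h2 => //; rewrite mem_index_enum.
Qed.

Lemma bigmin_gt c : c < x0 -> (forall i, P i -> c < F i) ->
  c < \big[Order.min/x0]_(j | P j) F j.
Proof.
move=> h0 h; apply: (big_ind (fun x => c < x)) => //.
by move=> x y hx hy /=; case: (leP x y).
Qed.
End BigMin.

Lemma choose_t m (A B : 'I_m -> R) (e0 : R) : 0 < e0 -> exists t, 0 < t /\ t < e0 /\
  forall G : {set 'I_m}, \sum_(k in G) A k != 0 -> \sum_(k in G) (t * A k + B k) != 0.
Proof.
move=> e00.
pose bad (G : {set 'I_m}) := - (\sum_(k in G) B k) / (\sum_(k in G) A k).
pose M0 := \big[Order.min/e0]_(G : {set 'I_m} | (\sum_(k in G) A k != 0) && (bad G != 0)) `|bad G|.
have M0pos : 0 < M0.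
  by apply: bigmin_gt => // G /andP[_ h]; rewrite normr_gt0.
have [M0le M0lb] := bigmin_lb_x0 (fun G : {set 'I_m} => (\sum_(k in G) A k != 0) && (bad G != 0))
   (fun G : {set 'I_m} => `|bad G|) e0.
have {}M0le : M0 <= e0 := M0le.
exists (M0 / 2); split; first lra; split; first lra.
move=> G hA; rewrite big_split /= -mulr_sumr; apply/eqP => h.
have eb : bad G = M0 / 2.
  rewrite /bad; have -> : \sum_(k in G) B k = - (M0 / 2 * \sum_(k in G) A k).
    by rewrite -(addKr (M0 / 2 * \sum_(k in G) A k) (\sum_(k in G) B k)) h addr0.
  by field.
have [b0|b0] := eqVneq (bad G) 0; first by move: eb; rewrite b0; lra.
have := M0lb G; rewrite hA b0 eb /= => /(_ isT).
rewrite -/M0 ger0_norm; lra.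
Qed.

Section T.
Variables (f : M -> M) (T : functional R M -> functional R M).
Hypothesis hT : is_hat d o f T.

Lemma T_free mu : in_free d o mu -> in_free d o (T mu).
Proof. by case: hT => h _ _ _; apply: h. Qed.

Lemma T_lin a mu nu phi : in_free d o mu -> in_free d o nu -> Lip0 d o phi ->
  T (fun psi => a * mu psi + nu psi) phi = a * T mu phi + T nu phi.
Proof. by move=> h1 h2 h3; case: hT => _ h _ _; apply: h.  Qed.

Lemma T_delta x phi : Lip0 d o phi -> T (delta x) phi = phi (f x).
Proof. by move=> h1; case: hT => _ _ _ h; apply: h. Qed.

Lemma T_eqv mu nu : in_free d o mu -> in_free d o nu -> eqv mu nu -> eqv (T mu) (T nu).
Proof.
move=> fm fn e phi hp.
pose w := fun psi => (-1) * mu psi + nu psi.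
have fw : in_free d o w by apply: free_lin.
have dw : dnorm d o w = 0%E.
  apply/eqP; rewrite eq_le dnorm_ge0 andbT.
  by apply: dnorm_le => psi hq; rewrite /w e // mulN1r addNr normr0.
case: hT => _ _ [C hC] _.
have := hC w fw; rewrite dw mule0 => hTw.
have := le_trans (dnorm_ge (T w) hp) hTw; rewrite lee_fin normr_le0 => /eqP.
rewrite /w T_lin //; last exact: ball_Lip0.
move=> h; have : T nu phi = T mu phi by rewrite -[T nu phi]subr0 -h; ring.
by [].
Qed.

Lemma iter_free n mu : in_free d o mu -> in_free d o (iter n T mu).
Proof. by elim: n => //= n IH h; apply: T_free; apply: IH. Qed.

Lemma iter_eqv n mu nu : in_free d o mu -> in_free d o nu -> eqv mu nu ->
  eqv (iter n T mu) (iter n T nu).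
Proof.
elim: n => //= n IH fm fn e; apply: T_eqv; try exact: iter_free.
exact: IH.
Qed.

Lemma delta_free x : in_free d o (delta x).
Proof.
apply: span_free; exists 1%N, (fun _ => 1), (fun _ => x) => phi _.
by rewrite big_ord1 mul1r.
Qed.

Lemma zero_free : in_free d o (fun _ => 0).
Proof.
apply: span_free; exists 0%N, (fun _ => 0), (fun _ => o) => psi _.
by rewrite big_ord0.
Qed.

Lemma T_mol n c x : eqv (T (@mol n c x)) (mol c (f \o x)).
Proof.
elim: n c x => [|n IH] c x phi hp.
  have -> : mol c x = fun _ => 0.
    by apply: funext => psi; rewrite /mol big_ord0.
  rewrite /mol big_ord0.
  have := T_lin 1 zero_free zero_free (ball_Lip0 hp).
  have -> : (fun psi : M -> R => 1 * 0 + 0) = (fun _ => 0 : R).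
    by apply: funext => psi; rewrite mul1r addr0.
  rewrite mul1r => h; lra.
pose c' := fun i : 'I_n => c (widen_ord (leqnSn n) i).
pose x' := fun i : 'I_n => x (widen_ord (leqnSn n) i).
have -> : mol c x = fun psi => c ord_max * delta (x ord_max) psi + mol c' x' psi.
  by apply: funext => psi; rewrite /mol big_ord_recr /= addrC.
have hL := ball_Lip0 hp.
rewrite T_lin ?delta_free ?span_free ?span_mol //.
rewrite T_delta // (IH c' x' phi hp) /mol big_ord_recr /= addrC.
  by []. exact: delta_free. exact: (span_free (span_mol _ _)).
Qed.

Lemma iter_mol n k c x : eqv (iter n T (@mol k c x)) (mol c (fun i => iter n f (x i))).
Proof.
elim: n => [|n IH] phi hp //=.
rewrite (T_eqv (iter_free n (span_free (span_mol c x))) (span_free (span_mol _ _)) IH) //.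
by rewrite (T_mol _ _ hp).
Qed.

Lemma main1 v : in_span_delta d o v -> A_set d o T v -> dense_in_free d o (A_set d o T).
Proof.
move=> [n1 [a [x hv]]] [vfree vcvg] mu mufree e e0.
have [_ apx] := mufree.
have e2 : 0 < e / 2 by lra.
have [w [wspan hwe]] := apx _ e2.
have [n2 [b [y hw]]] := wspan.
pose z := zc x y.
pose A := @cl n1 n2 a.
pose Bc := @cr n1 n2 b.
have vA : eqv v (mol A z).
  by move=> phi hp; rewrite mol_l hv //; exact: ball_Lip0.
have wB : eqv w (mol Bc z).
  by move=> phi hp; rewrite mol_r hw //; exact: ball_Lip0.
have [[_ [Cv hCv]] _] := vfree.
set Cv' := `|Cv| + 1.
have Cv'0 : 0 < Cv' by rewrite /Cv'; have := normr_ge0 Cv; lra.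
have e40 : 0 < e / (4 * Cv') by rewrite divr_gt0 // mulr_gt0.
have [t [t0 [te ht]]] := choose_t A Bc e40.
pose Ct := fun k => t * A k + Bc k.
pose nu := fun psi => t * v psi + w psi.
have nufree : in_free d o nu := free_lin t vfree (span_free wspan).
have molfree : forall c, in_free d o (@mol (n1 + n2) c z).
  by move=> c; apply: span_free; apply: span_mol.
have nuC : eqv nu (mol Ct z).
  by move=> phi hp; rewrite /nu vA // wB // mol_lin.
have itnu : forall n, dnorm d o (iter n T nu) =
    dnorm d o (mol Ct (fun i => iter n f (z i))).
  move=> n; apply: dnorm_eqv => phi hp.
  by rewrite (iter_eqv n nufree (molfree Ct) nuC hp) (iter_mol n Ct z hp).
have itv : forall n, dnorm d o (iter n T v) =
    dnorm d o (mol A (fun i => iter n f (z i))).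
  move=> n; apply: dnorm_eqv => phi hp.
  by rewrite (iter_eqv n vfree (molfree A) vA hp) (iter_mol n A z hp).
pose de := \big[Order.min/1]_(G : {set 'I_(n1 + n2)} | \sum_(k in G) A k != 0)
   `|\sum_(k in G) Ct k|.
have de0 : 0 < de.
  by apply: bigmin_gt => // G hG; rewrite normr_gt0; apply: ht.
have [_ hde] := bigmin_lb_x0 (fun G : {set 'I_(n1 + n2)} => \sum_(k in G) A k != 0)
   (fun G : {set 'I_(n1 + n2)} => `|\sum_(k in G) Ct k|) 1.
set ka := de / ((n1 + n2).+1%:R * (\sum_k `|A k| + 1)).
have ka0 : 0 < ka.
  rewrite /ka divr_gt0 // mulr_gt0 ?ltr0Sn //.
  have : 0 <= \sum_k `|A k| by apply: sumr_ge0.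
  lra.
exists nu; split.
  split => //; apply/cvgeyPge => r.
  apply: filterS (cvgey_gt vcvg (r / ka)) => n hn.
  rewrite itnu; rewrite itv in hn.
  have [_ [phi hp <-] hlt] := ereal_sup_gt hn.
  have hE := @est _ A Ct (fun i => iter n f (z i)) de de0 hde phi hp.
  apply: le_trans; last exact: hE. rewrite lee_fin -/ka.
  move: hlt; rewrite lte_fin ltr_pdivrMr // => hlt; exact: ltW.
apply: le_lt_trans (dnorm_le (r := e / 2 + e / 4) _) _; last by rewrite lte_fin; lra.
move=> phi hp; rewrite /fsub /nu.
have h1 := dnorm_lt hwe hp; rewrite /fsub in h1.
have h2 := hCv phi hp.
have -> : mu phi - (t * v phi + w phi) = (mu phi - w phi) - t * v phi by ring.
apply: le_trans (ler_normB _ _) _; rewrite normrM (gtr0_norm t0).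
have h3 : `|v phi| <= Cv' by rewrite /Cv'; have := ler_norm Cv; lra.
have : t * (4 * Cv') < e by rewrite -ltr_pdivlMr // mulr_gt0.
have : t * `|v phi| <= t * Cv' by rewrite ler_wpM2l //; lra.
nra.
Qed.

End T.
End FA.

Theorem theorem5p4 (R : realType) (M : Type) (d : M -> M -> R) (o : M)
    (f : M -> M) (T : functional R M -> functional R M) :
  is_metric d -> complete_metric d -> Lip0_self d o f -> is_hat d o f T ->
  ((exists v, in_span_delta d o v /\ A_set d o T v) \/
   nonempty_interior_in_free d o (A_set d o T) \/
   (exists x : M, (fun n : nat => d o (iter n f x)) @ \oo --> +oo)) ->
  dense_in_free d o (A_set d o T).
Proof.
move=> hd _ _ hT [[v [vs va]]|[[mu0 [r [r0 [Amu0 hb]]]]|[x hx]]].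
- exact: (main1 hd hT vs va).
- have [_ apx] := Amu0.1.
  have [nu [nus hnu]] := apx r r0.
  apply: (main1 hd hT nus); apply: hb; first exact: span_free.
  by rewrite dnorm_sym.
- have xs : in_span_delta d o (delta x).
    by exists 1%N, (fun _ => 1), (fun _ => x) => phi _; rewrite big_ord1 mul1r.
  apply: (main1 hd hT xs); split; first exact: span_free.
  apply/cvgeyPge => r.
  apply: filterS (cvgry_ge hx r) => n hn /=.
  have e1 : eqv d o (delta x) (mol (fun _ : 'I_1 => 1) (fun _ => x)).
    by move=> phi _; rewrite /mol big_ord1 mul1r.
  have -> : dnorm d o (iter n T (delta x)) =
      dnorm d o (mol (fun _ : 'I_1 => 1) (fun _ => iter n f x)).
    apply: dnorm_eqv => phi hp.
    rewrite (iter_eqv hd hT n (span_free xs) (span_free (span_mol d o _ _)) e1 hp).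
    by rewrite (iter_mol hd hT n _ _ hp).
  have hb0 : Lip0_ball d o (fun z => d z o).
    split; first by rewrite d_xx.
    move=> y1 y2; rewrite ler_norml; have := d_tri hd y1 y2 o; have := d_tri hd y2 y1 o.
    rewrite (d_sym hd y2 y1); move=> ? ?; apply/andP; split; lra.
  apply: le_trans; last exact: (dnorm_ge _ hb0).
  rewrite lee_fin /mol big_ord1 mul1r d_sym // ger0_norm //; exact: d_ge0.
Qed.
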